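(* Let $P$ be a poset. Then $P$ is the colimit in $\mathbf{Pos}$ of each of the following inclusion functors: (i) $\mathbf{pmCh}_P\to\mathbf{Pos}$; (ii) $\mathbf{mCh}_P\to\mathbf{Pos}$.
   Context: $\mathbf{Pos}$ is the category of posets and order-preserving maps; $\mathbf{Pos}_{in}$ its wide subcategory of order-preserving inclusions. A chain of $P$ is a totally ordered sub-poset. $\mathbf{pmCh}_P$ is the subcategory of $\mathbf{Pos}_{in}$ consisting of the maximal chains of $P$ together with their pairwise pullbacks in $\mathbf{Pos}$ (the full sub-posets $C_1\cap C_2$ of $P$ for maximal chains $C_1,C_2$) and the inclusions between them. A chain quasi-pullback of two chains $C_1,C_2$ of $P$ is a chain $C_{12}$ with inclusions $C_{12}\to C_1$, $C_{12}\to C_2$ such that every chain $C'$ included in both $C_1$ and $C_2$ is included in $C_{12}$; these are exactly the maximal chains of $C_1\cap C_2$. $\mathbf{mCh}_P$ is the completion, under chain quasi-pullbacks, of the discrete subcategory of $\mathbf{Pos}_{in}$ consisting of the maximal chains of $P$ (with the resulting inclusions); it is a subcategory of the category of chains of $P$ and inclusions. *)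

(* Defs.v *)
Record poset := Poset {
  car :> Type;
  le : car -> car -> Prop;
  le_refl : forall x, le x x;
  le_antisym : forall x y, le x y -> le y x -> x = y;
  le_trans : forall x y z, le x y -> le y z -> le x z
}.
Arguments le {p} _ _.

(* Sub-posets of P are given by predicates S; the sub-poset is the
   subtype {x | S x} with the order induced from P (full sub-poset). *)
Definition subset_of {P : poset} (S T : P -> Prop) : Prop :=
  forall x, S x -> T x.

Definition chain {P : poset} (S : P -> Prop) : Prop :=
  forall x y, S x -> S y -> le x y \/ le y x.

Definition maximal_chain {P : poset} (S : P -> Prop) : Prop :=
  chain S /\ forall T, chain T -> subset_of S T -> subset_of T S.

Definition chain_quasi_pullback {P : poset} (C1 C2 C : P -> Prop) : Prop :=
  chain C /\ subset_of C C1 /\ subset_of C C2 /\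
  forall T, chain T -> subset_of T C1 -> subset_of T C2 ->
    subset_of C T -> subset_of T C.

Definition pmCh_obj (P : poset) (S : P -> Prop) : Prop :=
  maximal_chain S \/
  exists C1 C2, maximal_chain C1 /\ maximal_chain C2 /\
    forall x, S x <-> (C1 x /\ C2 x).

Inductive mCh_obj (P : poset) : (P -> Prop) -> Prop :=
| mCh_max : forall S, maximal_chain S -> mCh_obj P S
| mCh_qpb : forall C1 C2 C, mCh_obj P C1 -> mCh_obj P C2 ->
    chain_quasi_pullback C1 C2 C -> mCh_obj P C.

Definition sub_monotone {P Q : poset} (S : P -> Prop)
  (f : {x : P | S x} -> Q) : Prop :=
  forall x y : {x : P | S x}, le (proj1_sig x) (proj1_sig y) ->
    le (f x) (f y).

Definition monotone {P Q : poset} (g : P -> Q) : Prop :=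
  forall x y, le x y -> le (g x) (g y).

(* P, with the inclusion maps, is the colimit in Pos of the inclusion
   functor from the category whose objects are the sub-posets S of P
   with [Obj S] and whose morphisms are all inclusions between them:
   every cocone (compatible family of order-preserving maps) factors
   uniquely through an order-preserving map P -> Q. *)
Definition is_colimit_of_inclusions (P : poset) (Obj : (P -> Prop) -> Prop)
  : Prop :=
  forall (Q : poset) (f : forall S, Obj S -> {x : P | S x} -> Q),
    (forall S (hS : Obj S), sub_monotone S (f S hS)) ->
    (forall S T (hS : Obj S) (hT : Obj T) (hST : subset_of S T)
        x (hx : S x),
        f S hS (exist _ x hx) = f T hT (exist _ x (hST x hx))) ->
    exists! g : P -> Q, monotone g /\
      forall S (hS : Obj S) x (hx : S x), g x = f S hS (exist _ x hx).

(* Main.v *)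
Require Import Defs.
From Stdlib Require Import Classical FunctionalExtensionality PropExtensionality ProofIrrelevance IndefiniteDescription.

Lemma set_eq {P : poset} (A B : P -> Prop) :
  subset_of A B -> subset_of B A -> A = B.
Proof.
  intros H1 H2. apply functional_extensionality; intro x.
  apply propositional_extensionality; split; auto.
Qed.

Definition ext {P : poset} (S : P -> Prop) (y : P) : Prop :=
  ~ S y /\ chain (fun z => S z \/ z = y).

Definition nxt {P : poset} (S : P -> Prop) : P -> Prop :=
  fun x => S x \/ exists H : (exists y, ext S y),
    x = proj1_sig (constructive_indefinite_description _ H).

Definition bigU {P : poset} (C0 : P -> Prop) (F : (P -> Prop) -> Prop) : P -> Prop :=
  fun x => C0 x \/ exists S, F S /\ S x.

Inductive tower {P : poset} (C0 : P -> Prop) : (P -> Prop) -> Prop :=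
| t_base : tower C0 C0
| t_next : forall S, tower C0 S -> tower C0 (nxt S)
| t_lub : forall F, (forall S, F S -> tower C0 S) -> tower C0 (bigU C0 F).

Lemma nxt_incl {P : poset} (S : P -> Prop) : subset_of S (nxt S).
Proof. intros x h; left; exact h. Qed.

Lemma tower_base {P : poset} (C0 S : P -> Prop) : tower C0 S -> subset_of C0 S.
Proof.
  induction 1; intros x h.
  - exact h.
  - left; auto.
  - left; exact h.
Qed.

Definition extreme {P : poset} (C0 c : P -> Prop) : Prop :=
  forall x, tower C0 x -> subset_of x c -> ~ subset_of c x -> subset_of (nxt x) c.

Lemma tower_cmp {P : poset} (C0 c : P -> Prop) : tower C0 c -> extreme C0 c ->
  forall x, tower C0 x -> subset_of x c \/ subset_of (nxt c) x.
Proof.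
  intros Tc Ec x Tx. induction Tx as [|S TS IH|F HF IH].
  - left; apply tower_base; exact Tc.
  - destruct IH as [IH|IH].
    + destruct (classic (subset_of c S)) as [h|h].
      * right. rewrite (set_eq S c IH h). intros z hz; exact hz.
      * left. apply Ec; auto.
    + right. intros z hz. left. apply IH; exact hz.
  - destruct (classic (exists S, F S /\ subset_of (nxt c) S)) as [[S [hS h]]|h].
    + right. intros z hz. right. exists S. split; auto.
    + left. intros z [hz|[S [hS hz]]].
      * apply (tower_base C0 c Tc); exact hz.
      * destruct (IH S hS) as [h'|h'].
        -- apply h'; exact hz.
        -- exfalso; apply h; exists S; auto.
Qed.

Lemma tower_extreme {P : poset} (C0 c : P -> Prop) : tower C0 c -> extreme C0 c.
Proof.
  induction 1 as [|c Tc IH|F HF IH]; intros x Tx h1 h2.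
  - exfalso. apply h2. apply tower_base; exact Tx.
  - destruct (tower_cmp C0 c Tc IH x Tx) as [h|h].
    + destruct (classic (subset_of c x)) as [h'|h'].
      * rewrite (set_eq x c h h'). intros z hz; exact hz.
      * intros z hz. left. apply (IH x Tx h h'); exact hz.
    + exfalso; apply h2; exact h.
  - destruct (classic (exists S, F S /\ subset_of x S /\ ~ subset_of S x))
      as [[S [hS [h3 h4]]]|h].
    + intros z hz. right. exists S. split; auto. apply (IH S hS x Tx h3 h4); exact hz.
    + exfalso. apply h2. intros z [hz|[S [hS hz]]].
      * apply (tower_base C0 x Tx); exact hz.
      * destruct (tower_cmp C0 S (HF S hS) (IH S hS) x Tx) as [h'|h'].
        -- destruct (classic (subset_of S x)) as [h''|h''].
           ++ apply h''; exact hz.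
           ++ exfalso; apply h; exists S; auto.
        -- apply h'; left; exact hz.
Qed.

Lemma tower_lin {P : poset} (C0 x c : P -> Prop) : tower C0 x -> tower C0 c ->
  subset_of x c \/ subset_of c x.
Proof.
  intros Tx Tc.
  destruct (tower_cmp C0 c Tc (tower_extreme C0 c Tc) x Tx) as [h|h]; auto.
  right. intros z hz. apply h. left; exact hz.
Qed.

Lemma nxt_chain {P : poset} (S : P -> Prop) : chain S -> chain (nxt S).
Proof.
  intros HS.
  destruct (classic (exists y, ext S y)) as [H|H].
  - pose (y0 := proj1_sig (constructive_indefinite_description _ H)).
    assert (Hy : ext S y0) by exact (proj2_sig (constructive_indefinite_description _ H)).
    assert (Hs : subset_of (nxt S) (fun z => S z \/ z = y0)).
    { intros z [hz|[H' hz]]. left; exact hz. right.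
      rewrite (proof_irrelevance _ H' H) in hz. exact hz. }
    intros a b ha hb. apply (proj2 Hy); apply Hs; auto.
  - intros a b [ha|[H' _]] [hb|[H'' _]]; try (exfalso; apply H; assumption).
    apply HS; auto.
Qed.

Lemma tower_chain {P : poset} (C0 S : P -> Prop) : chain C0 -> tower C0 S -> chain S.
Proof.
  intros H0 T. induction T as [|S TS IH|F HF IH].
  - exact H0.
  - apply nxt_chain; exact IH.
  - assert (K : forall a, bigU C0 F a -> exists A, tower C0 A /\ chain A /\ A a).
    { intros a [ha|[S [hS ha]]].
      - exists C0; repeat split; auto. constructor.
      - exists S; repeat split; auto. }
    intros a b ha hb.
    destruct (K a ha) as [A [TA [CA hA]]].
    destruct (K b hb) as [B [TB [CB hB]]].
    destruct (tower_lin C0 A B TA TB) as [h|h].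
    + apply CB; auto.
    + apply CA; auto.
Qed.

Lemma hmp {P : poset} (C0 : P -> Prop) : chain C0 ->
  exists M, maximal_chain M /\ subset_of C0 M.
Proof.
  intros H0.
  pose (U := bigU C0 (tower C0)).
  assert (TU : tower C0 U) by (apply t_lub; auto).
  assert (CU : chain U) by (apply (tower_chain C0); auto).
  exists U. split; [split|].
  - exact CU.
  - intros T CT hUT t ht.
    destruct (classic (U t)) as [h|h]; auto. exfalso.
    assert (E : ext U t).
    { split; auto. intros a b [ha|ha] [hb|hb]; subst; apply CT; auto. }
    assert (H : exists y, ext U y) by (exists t; exact E).
    pose (y0 := proj1_sig (constructive_indefinite_description _ H)).
    assert (Hy : ext U y0) by exact (proj2_sig (constructive_indefinite_description _ H)).
    apply (proj1 Hy). right. exists (nxt U). split.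
    + apply t_next; exact TU.
    + right. exists H. reflexivity.
  - intros z hz. left; exact hz.
Qed.

Lemma colim_gen (P : poset) (Obj : (P -> Prop) -> Prop)
  (H1 : forall M, maximal_chain M -> Obj M)
  (H2 : forall S, Obj S -> exists M, maximal_chain M /\ subset_of S M)
  (H3 : forall M1 M2, maximal_chain M1 -> maximal_chain M2 ->
          Obj (fun z => M1 z /\ M2 z)) :
  is_colimit_of_inclusions P Obj.
Proof.
  intros Q f Hmono Hcomp.
  assert (fpi : forall S hS hS' x hx hx',
            f S hS (exist _ x hx) = f S hS' (exist _ x hx')).
  { intros. rewrite (proof_irrelevance _ hS hS'), (proof_irrelevance _ hx hx').
    reflexivity. }
  assert (agree : forall M1 M2 (h1 : Obj M1) (h2 : Obj M2),
            maximal_chain M1 -> maximal_chain M2 ->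
            forall x (hx1 : M1 x) (hx2 : M2 x),
            f M1 h1 (exist _ x hx1) = f M2 h2 (exist _ x hx2)).
  { intros M1 M2 h1 h2 m1 m2 x hx1 hx2.
    pose (hI := H3 M1 M2 m1 m2).
    rewrite <- (fpi _ h1 h1 x (proj1 (conj hx1 hx2)) hx1).
    rewrite <- (fpi _ h2 h2 x (proj2 (conj hx1 hx2)) hx2).
    rewrite <- (Hcomp _ M1 hI h1 (fun z h => proj1 h) x (conj hx1 hx2)).
    rewrite <- (Hcomp _ M2 hI h2 (fun z h => proj2 h) x (conj hx1 hx2)).
    reflexivity. }
  assert (ex : forall x : P, exists M, maximal_chain M /\ M x).
  { intro x. destruct (hmp (fun z => z = x)) as [M [hM hs]].
    - intros a b ha hb; subst; left; apply le_refl.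
    - exists M; split; auto. }
  pose (Mx := fun x => proj1_sig (constructive_indefinite_description _ (ex x))).
  pose (pMx := fun x => proj2_sig (constructive_indefinite_description _ (ex x))).
  pose (g := fun x => f (Mx x) (H1 _ (proj1 (pMx x))) (exist _ x (proj2 (pMx x)))).
  assert (spec : forall S (hS : Obj S) x (hx : S x), g x = f S hS (exist _ x hx)).
  { intros S hS x hx. destruct (H2 S hS) as [M' [m' sub]].
    rewrite (Hcomp S M' hS (H1 M' m') sub x hx).
    unfold g. apply agree; auto. exact (proj1 (pMx x)). }
  exists g. split; [split|].
  - intros x y xy.
    destruct (hmp (fun z => z = x \/ z = y)) as [M [hM hs]].
    + intros a b [ha|ha] [hb|hb]; subst; auto using le_refl.
    + rewrite (spec M (H1 M hM) x (hs x (or_introl eq_refl))).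
      rewrite (spec M (H1 M hM) y (hs y (or_intror eq_refl))).
      apply Hmono. exact xy.
  - exact spec.
  - intros g' [_ spec']. apply functional_extensionality; intro x.
    rewrite (spec' (Mx x) (H1 _ (proj1 (pMx x))) x (proj2 (pMx x))). reflexivity.
Qed.

Theorem proposition6p2 (P : poset) :
  is_colimit_of_inclusions P (pmCh_obj P) /\
  is_colimit_of_inclusions P (mCh_obj P).
Proof.
  split; apply colim_gen.
  - intros M hM; left; exact hM.
  - intros S [hS|[C1 [C2 [m1 [m2 hS]]]]].
    + exists S; split; auto. intros z hz; exact hz.
    + exists C1; split; auto. intros z hz; apply hS; exact hz.
  - intros M1 M2 m1 m2. right. exists M1, M2. split; [exact m1|split; [exact m2|]]. intro x; split; intro h; exact h.
  - intros M hM; apply mCh_max; exact hM.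
  - intros S hS. induction hS as [S hS|C1 C2 C h1 IH1 h2 IH2 [_ [hc _]]].
    + exists S; split; auto. intros z hz; exact hz.
    + destruct IH1 as [M [hM sub]]. exists M; split; auto. intros z hz; apply sub, hc, hz.
  - intros M1 M2 m1 m2. apply (mCh_qpb P M1 M2).
    + apply mCh_max; exact m1.
    + apply mCh_max; exact m2.
    + split; [|split; [|split]].
      * intros a b ha hb. apply (proj1 m1); [apply ha|apply hb].
      * intros z hz; apply hz.
      * intros z hz; apply hz.
      * intros T0 _ T1 T2 _ z hz. split; auto.
Qed.
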